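(* Let $\kappa$ be an uncountable regular cardinal, let $\mathcal{I}$ be a $\kappa$-complete proper ideal on $\kappa$ containing every bounded subset of $\kappa$, and let $\nu\in\{2,\kappa\}$. Then the space ${}^{\kappa}\nu\times{}^{\kappa}\kappa$ with the product topology $\tau_{\mathcal{I}}\times\tau_{\mathcal{I}}$ is homeomorphic to $({}^{\kappa}\kappa,\tau_{\mathcal{I}})$.
   Context: For $\mu\in\{2,\kappa\}$, ${}^{\kappa}\mu$ is the set of functions $\kappa\to\mu$; for $f\colon D\to\mu$ with $D\in\mathcal{I}$, $\mathbf{N}_f=\{x\in{}^{\kappa}\mu: f\subseteq x\}$, and $\tau_{\mathcal{I}}$ on ${}^{\kappa}\mu$ is the topology generated by these sets. *)

(* Defs.v *)
From HB Require Import structures.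
From mathcomp Require Import all_boot.
From mathcomp Require Import boolp classical_sets functions cardinality.
Set Implicit Arguments.
Unset Strict Implicit.
Unset Printing Implicit Defensive.
Local Open Scope classical_set_scope.
Local Open Scope card_scope.

(** * The cardinal kappa, presented as a well-ordered type (K, lt) *)

Definition strict_well_order (K : Type) (lt : K -> K -> Prop) : Prop :=
  [/\ (forall x, ~ lt x x),
      (forall x y z, lt x y -> lt y z -> lt x z),
      (forall x y, [\/ lt x y, x = y | lt y x]) &
      well_founded lt].

(* the order type of (K, lt) is a cardinal (an initial ordinal):
   no proper initial segment has the cardinality of K *)
Definition initial_ordinal (K : Type) (lt : K -> K -> Prop) : Prop :=
  forall x : K, ~ ([set: K] #<= [set y | lt y x]).

Definition small (K T : Type) (A : set T) : Prop := ~ ([set: K] #<= A).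

Definition bounded (K : Type) (lt : K -> K -> Prop) (A : set K) : Prop :=
  exists x, forall y, A y -> lt y x.

Definition regular (K : Type) (lt : K -> K -> Prop) : Prop :=
  forall A : set K, small K A -> bounded lt A.

Definition uncountable_type (K : Type) : Prop := ~ ([set: K] #<= [set: nat]).

Definition uncountable_regular_cardinal (K : Type) (lt : K -> K -> Prop) :=
  [/\ strict_well_order lt, initial_ordinal lt, regular lt & uncountable_type K].

Definition ideal (K : Type) (I : set (set K)) : Prop :=
  [/\ I set0,
      (forall A B, B `<=` A -> I A -> I B) &
      (forall A B, I A -> I B -> I (A `|` B))].

Definition proper_ideal (K : Type) (I : set (set K)) : Prop :=
  ideal I /\ ~ I [set: K].

Definition kappa_complete (K : Type) (I : set (set K)) : Prop :=
  forall Fam : set (set K), Fam `<=` I -> small K Fam -> I (\bigcup_(A in Fam) A).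

Definition contains_bounded (K : Type) (lt : K -> K -> Prop) (I : set (set K)) :=
  forall A : set K, bounded lt A -> I A.

Definition is_topology (X : Type) (O : set (set X)) : Prop :=
  [/\ O setT,
      (forall U V, O U -> O V -> O (U `&` V)) &
      (forall F : set (set X), F `<=` O -> O (\bigcup_(U in F) U))].

Definition generated_topology (X : Type) (S : set (set X)) : set (set X) :=
  [set U | forall O : set (set X), is_topology O -> S `<=` O -> O U].

(* N_f for f : D -> mu with D in I, f given as the restriction of g to D *)
Definition Nset (K mu : Type) (D : set K) (g : K -> mu) : set (K -> mu) :=
  [set x | forall a, D a -> x a = g a].

Definition tauI_basic (K mu : Type) (I : set (set K)) : set (set (K -> mu)) :=
  [set N | exists (D : set K) (g : K -> mu), I D /\ N = Nset D g].

Definition tauI (K mu : Type) (I : set (set K)) : set (set (K -> mu)) :=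
  generated_topology (@tauI_basic K mu I).

Definition product_topology (X Y : Type) (OX : set (set X)) (OY : set (set Y))
  : set (set (X * Y)) :=
  generated_topology [set W | exists U V, [/\ OX U, OY V & W = U `*` V]].

Definition continuous_wrt (X Y : Type) (OX : set (set X)) (OY : set (set Y))
  (f : X -> Y) : Prop :=
  forall V, OY V -> OX (f @^-1` V).

Definition homeomorphic (X Y : Type) (OX : set (set X)) (OY : set (set Y)) :=
  exists (f : X -> Y) (g : Y -> X),
    [/\ cancel f g, cancel g f, continuous_wrt OX OY f & continuous_wrt OY OX g].

Arguments tauI {K} mu I.
Arguments tauI_basic {K} mu I.

(* Main.v *)
From HB Require Import structures.
Require Import Defs.
From mathcomp Require Import all_boot.
From mathcomp Require Import boolp classical_sets functions cardinality.
Set Implicit Arguments. Unset Strict Implicit. Unset Printing Implicit Defensive.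
Local Open Scope classical_set_scope.
Local Open Scope card_scope.

Definition pk (T : Type) (t0 : T) (P : T -> Prop) : T :=
  match pselect (exists x, P x) with left h => proj1_sig (cid h) | right _ => t0 end.
Lemma pkP T (t0 : T) (P : T -> Prop) : (exists x, P x) -> P (pk t0 P).
Proof. by rewrite /pk; case: pselect => // h _; case: (cid h). Qed.

Lemma le_of_fun T U (A : set T) (B : set U) (f : T -> U) :
  (forall x, A x -> B (f x)) -> (forall x y, A x -> A y -> f x = f y -> x = y) ->
  A #<= B.
Proof.
move=> H1 H2; have : $|{injfun A >-> B}|.
  apply/injfunPex; exists f; first by move=> x; apply: H1.
  by move=> x y; rewrite !inE; apply: H2.
by case=> g; exact: inj_card_le g.
Qed.

Lemma le_funP T U (A : set T) (B : set U) : A #<= B -> forall a0, A a0 ->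
  exists f : T -> U, (forall x, A x -> B (f x)) /\
     (forall x y, A x -> A y -> f x = f y -> x = y).
Proof.
move=> /card_leP[g] a0 Aa0.
have Ha0 : a0 \in A by rewrite inE.
pose f x := match pselect (A x) with
  | left h => val (g (exist _ x (mem_set h)))
  | right _ => val (g (exist _ a0 Ha0)) end.
exists f; split.
  move=> x Ax; rewrite /f; case: pselect => // h.
  by set v := g _; have := valP v; rewrite inE.
move=> x y Ax Ay; rewrite /f; case: pselect => // hx; case: pselect => // hy.
move=> /val_inj /(@inj _ _ _ g); rewrite !inE => /(_ I I) [].
by [].
Qed.

Lemma bij_of_eq T U : [set: T] #= [set: U] ->
  exists (e : T -> U) (e' : U -> T), cancel e e' /\ cancel e' e.
Proof.
move=> /card_bijP [f [g fK gK]].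
exists (fun t => val (f (exist _ t (mem_set (I : setT t))))).
exists (fun u => val (g (exist _ u (mem_set (I : setT u))))).
split.
  move=> t /=.
  set a := exist _ t _.
  have -> : exist _ (val (f a)) (mem_set (I : setT (val (f a)))) = f a by apply: val_inj.
  by rewrite fK.
move=> u /=.
set a := exist _ u _.
have -> : exist _ (val (g a)) (mem_set (I : setT (val (g a)))) = g a by apply: val_inj.
by rewrite gK.
Qed.

Lemma prod_mono T U (A : set T) (B : set U) : A #<= B -> A `*` A #<= B `*` B.
Proof.
move=> le; case: (pselect (exists a, A a)) => [[a0 Aa0]|nA].
  have [f [f1 f2]] := le_funP le Aa0.
  apply: (@le_of_fun _ _ _ _ (fun p => (f p.1, f p.2))).
    by move=> [x y] [/= ? ?]; split; apply: f1.
  move=> [x y] [x' y'] [/= ? ?] [/= ? ?] [] /f2 e1 /f2 e2.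
  by rewrite e1 // e2.
have -> : A `*` A = set0.
  by apply/funext => -[x y]; apply/propext; split => // -[/= ? ?]; apply: nA; exists x.
exact: card_ge0.
Qed.

Lemma two_distinct T (A : set T) : infinite_set A -> exists a c, [/\ A a, A c & a <> c].
Proof.
move=> /infiniteP le; have [f [f1 f2]] := le_funP le (I : setT 0%N).
exists (f 0%N), (f 1%N); split; try exact: f1.
by move=> /f2 e; have := e I I.
Qed.

Section Ord.
Variables (K : Type) (lt : K -> K -> Prop).
Hypotheses (Hirr : forall x, ~ lt x x) (Htr : forall x y z, lt x y -> lt y z -> lt x z)
  (Htri : forall x y, [\/ lt x y, x = y | lt y x]) (Hwf : well_founded lt).

Definition leK x y := lt x y \/ x = y.
Definition Sg x := [set y | lt y x].
Definition Tg x := [set y | leK y x].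
Definition mx (p : K * K) := if pselect (lt p.1 p.2) then p.2 else p.1.
Definition W (p q : K * K) := lt (mx p) (mx q) \/
  (mx p = mx q /\ (lt p.1 q.1 \/ (p.1 = q.1 /\ lt p.2 q.2))).

Lemma leK_trans x y z : leK x y -> leK y z -> leK x z.
Proof.
move=> [h1|->] [h2|<-]; rewrite /leK; auto; left; exact: Htr h1 h2.
Qed.

Lemma mx_ge p : leK p.1 (mx p) /\ leK p.2 (mx p).
Proof.
rewrite /mx; case: pselect => h /=; first by split; [left|right].
split; first by right.
by case: (Htri p.1 p.2) => [//|->|]; [right|left].
Qed.

Lemma mx_in p : mx p = p.1 \/ mx p = p.2.
Proof. by rewrite /mx; case: pselect; auto. Qed.

Lemma W_acc m a b : mx (a, b) = m -> Acc W (a, b).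
Proof.
elim/(well_founded_ind Hwf): m a b => m IHm a.
elim/(well_founded_ind Hwf): a => a IHa b.
elim/(well_founded_ind Hwf): b => b IHb Hm.
constructor => -[c d] [H|[H1 [H2|[H2 H3]]]] /=.
- by apply: (IHm (mx (c, d))); rewrite -?Hm.
- by apply: IHa => //; rewrite H1.
- by simpl in H2; subst c; apply: IHb => //; rewrite H1.
Qed.

Lemma W_wf : well_founded W.
Proof. by move=> [a b]; exact: (@W_acc (mx (a, b))). Qed.

Lemma W_total p q : p <> q -> W p q \/ W q p.
Proof.
move=> npq; rewrite /W.
case: (Htri (mx p) (mx q)) => [h|e|h]; [by left; left|idtac|by right; left].
case: (Htri p.1 q.1) => [h|e1|h]; [by left; right; split => //; left|idtac|by right; right; split => //; left].
case: (Htri p.2 q.2) => [h|e2|h].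
- by left; right; split => //; right.
- by case: npq; case: p q e1 e2 {e} => ? ? [? ?] /= -> ->.
- by right; right; split => //; right.
Qed.

Lemma W_below p y : W y p -> Tg (mx p) y.1 /\ Tg (mx p) y.2.
Proof.
have [h1 h2] := mx_ge y.
have hm : W y p -> leK (mx y) (mx p) by move=> [h|[h _]]; [left|right].
by move=> /hm hm'; split; apply: leK_trans hm'.
Qed.


Lemma embed (X : set K) : (forall m, X m -> ~ (X #<= (Tg m `*` Tg m))) ->
  (X `*` X) #<= X.
Proof.
move=> HX; case: (pselect (exists k, X k)) => [[k0 Xk0]|nX]; last first.
  apply: (@le_of_fun _ _ _ _ fst); first by move=> p [].
  by move=> p q [h _]; case: nX; exists p.1.
pose F (p : K * K) (rec : forall y, W y p -> K) :=
  pk k0 (fun z => X z /\ ~ (exists y (H : W y p), rec y H = z)).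
pose h := Fix W_wf (fun _ => K) F.
have hE p : h p = F p (fun y _ => h y).
  apply: Fix_eq => p' f g Hfg; rewrite /F; congr pk.
  apply/funext => z; congr (_ /\ ~ _); apply/propext.
  by split => -[y [H e]]; exists y, H; rewrite -e Hfg.
have hP p : X (mx p) -> X (h p) /\ ~ (exists y (H : W y p), h y = h p).
  move=> Xm.
  have ex : exists z, X z /\ ~ (exists y (H : W y p), h y = z).
    case: (pselect (exists z, X z /\ ~ (exists y (H : W y p), h y = z))) => // nz.
    exfalso; apply: (HX _ Xm).
    have sub : X `<=` h @` [set y | W y p].
      move=> z Xz; apply: contrapT => nimg; apply: nz; exists z; split => //.
      by move=> [y [H e]]; apply: nimg; exists y.
    apply: card_le_trans (subset_card_le sub) _.
    apply: card_le_trans (card_image_le h _) _.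
    by apply: subset_card_le => y /W_below [].
  rewrite [h p]hE; exact: (pkP k0 ex).
apply: (@le_of_fun _ _ _ _ h).
  by move=> p [X1 X2]; apply: (proj1 (hP p _)); case: (mx_in p) => ->.
move=> x y [x1 x2] [y1 y2] e; apply: contrapT => nxy.
have Xmx : X (mx x) by case: (mx_in x) => ->.
have Xmy : X (mx y) by case: (mx_in y) => ->.
case: (W_total nxy) => H.
  by apply: (proj2 (hP y Xmy)); exists x, H.
by apply: (proj2 (hP x Xmx)); exists y, H; rewrite e.
Qed.

Lemma Tbound m (IH : infinite_set (Sg m) -> Sg m `*` Sg m #<= Sg m) (X : set K) :
  infinite_set X -> ~ (X #<= Sg m) -> ~ (X #<= Tg m `*` Tg m).
Proof.
move=> Xinf XS le.
case: (pselect (finite_set (Sg m))) => fin.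
  have eT : Tg m = Sg m `|` [set m].
    by apply/funext => y; apply/propext; split => -[h|h]; [left|right|left|right].
  apply: Xinf; apply: (card_le_finite le); apply: finite_setX;
    by rewrite eT finite_setU; split => //; apply: finite_set1.
have [a [c [Sa Sc nac]]] := two_distinct fin.
have TS : Tg m #<= Sg m `*` Sg m.
  apply: (@le_of_fun _ _ _ _
    (fun y => if pselect (y = m) then (a, c) else (y, a))).
    move=> y Ty; case: (pselect (y = m)) => [e|ne] /=; first by split.
    by split => //=; case: Ty.
  move=> y z _ _; case: (pselect (y = m)) => ey; case: (pselect (z = m)) => ez /=.
  - by rewrite ey ez.
  - by case=> _ ca; case: nac; rewrite ca.
  - by case=> _ ac; case: nac; rewrite ac.
  - by case.
have TS' : Tg m #<= Sg m := card_le_trans TS (IH fin).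
apply: XS; apply: card_le_trans le _.
exact: card_le_trans (prod_mono TS') (IH fin).
Qed.

Lemma main_seg x : infinite_set (Sg x) -> Sg x `*` Sg x #<= Sg x.
Proof.
elim/(well_founded_ind Hwf): x => x IH Hinf.
case: (pselect (exists y, lt y x /\ Sg x #<= Sg y)) => [[y [lyx le]]|nb].
  have infy : infinite_set (Sg y) by move=> fy; apply: Hinf; exact: card_le_finite le fy.
  apply: card_le_trans (prod_mono le) _.
  apply: card_le_trans (IH y lyx infy) _.
  by apply: subset_card_le => z /= h; exact: Htr h lyx.
apply: embed => m Sxm.
apply: Tbound (IH m Sxm) _ Hinf _.
by move=> le; apply: nb; exists m.
Qed.

Lemma main_top : (forall x, ~ ([set: K] #<= Sg x)) -> infinite_set [set: K] ->
  [set: K * K] #= [set: K].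
Proof.
move=> init inf; apply: Cantor_Bernstein; last first.
  by apply: (@le_of_fun _ _ _ _ (fun k => (k, k))) => // x y _ _ [].
rewrite -setXTT; apply: embed => m _.
exact: Tbound (@main_seg m) _ inf (init m).
Qed.

End Ord.

Lemma gen_top X (S : set (set X)) : is_topology (generated_topology S).
Proof.
split.
- by move=> O [].
- by move=> U V HU HV O tO SO; case: (tO) => _ hI _; apply: hI; [apply: HU|apply: HV].
- move=> F FS O tO SO; case: (tO) => _ _ hU; apply: hU => U FU; exact: FS U FU O tO SO.
Qed.

Lemma gen_sub X (S : set (set X)) : S `<=` generated_topology S.
Proof. by move=> U SU O _ SO; apply: SO. Qed.

Lemma gen_union X (S : set (set X)) (F : set (set X)) : F `<=` S ->
  generated_topology S (\bigcup_(U in F) U).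
Proof.
move=> FS; have [_ _ hU] := gen_top S; apply: hU => U /FS; exact: gen_sub.
Qed.

Lemma cont_gen X Y (OX : set (set X)) (S : set (set Y)) (f : X -> Y) :
  is_topology OX -> (forall V, S V -> OX (f @^-1` V)) ->
  continuous_wrt OX (generated_topology S) f.
Proof.
move=> [hT hI hU] H V GV; apply: (GV [set V | OX (f @^-1` V)]) => //.
split => /=.
- by rewrite preimage_setT.
- by move=> U W hu hw; rewrite preimage_setI; apply: hI.
- move=> F FO.
  have -> : f @^-1` (\bigcup_(U in F) U) =
      \bigcup_(W in [set W | exists U, F U /\ W = f @^-1` U]) W.
    apply/funext => x; apply/propext; split.
      by move=> [U FU Ux]; exists (f @^-1` U) => //; exists U.
    by move=> [W [U [FU ->]] Wx]; exists U.
  by apply: hU => W [U [FU ->]]; apply: FO.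
Qed.

Section Homeo.
Variables (K A B C : Type) (I : set (set K)) (e : A * B -> C) (e' : C -> A * B).
Hypotheses (eK : cancel e e') (e'K : cancel e' e).

Definition hf (p : (K -> A) * (K -> B)) : K -> C := fun a => e (p.1 a, p.2 a).
Definition hg (z : K -> C) : (K -> A) * (K -> B) :=
  (fun a => (e' (z a)).1, fun a => (e' (z a)).2).

Lemma hf_cont : continuous_wrt (product_topology (tauI A I) (tauI B I)) (tauI C I) hf.
Proof.
apply: cont_gen; first exact: gen_top.
move=> V [D [h [ID ->]]].
have -> : hf @^-1` Nset D h =
   Nset D (fun a => (e' (h a)).1) `*` Nset D (fun a => (e' (h a)).2).
  apply/funext => -[x y]; apply/propext; split.
    move=> H; split => a Da /=; rewrite -(H a Da) /= eK //.
  move=> [/= H1 H2] a Da; rewrite /hf /= H1 // H2 //.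
  by rewrite -surjective_pairing e'K.
apply: gen_sub; exists (Nset D (fun a => (e' (h a)).1)), (Nset D (fun a => (e' (h a)).2)).
by split => //; apply: gen_sub; eexists; eexists; split; eauto.
Qed.

Lemma hg1_cont : continuous_wrt (tauI C I) (tauI A I) (fun z => (hg z).1).
Proof.
apply: cont_gen; first exact: gen_top.
move=> V [D [h [ID ->]]].
have -> : (fun z => (hg z).1) @^-1` Nset D h =
   \bigcup_(W in [set W | exists w : K -> B, W = Nset D (fun a => e (h a, w a))]) W.
  apply/funext => z; apply/propext; split.
    move=> H; exists (Nset D (fun a => e (h a, (e' (z a)).2))).
      by exists (fun a => (e' (z a)).2).
    by move=> a Da /=; rewrite -(H a Da) /= -surjective_pairing e'K.
  by move=> [W [w ->] Hz] a Da /=; rewrite Hz // eK.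
apply: gen_union => W [w ->]; exists D, (fun a => e (h a, w a)); done.
Qed.

Lemma hg2_cont : continuous_wrt (tauI C I) (tauI B I) (fun z => (hg z).2).
Proof.
apply: cont_gen; first exact: gen_top.
move=> V [D [h [ID ->]]].
have -> : (fun z => (hg z).2) @^-1` Nset D h =
   \bigcup_(W in [set W | exists w : K -> A, W = Nset D (fun a => e (w a, h a))]) W.
  apply/funext => z; apply/propext; split.
    move=> H; exists (Nset D (fun a => e ((e' (z a)).1, h a))).
      by exists (fun a => (e' (z a)).1).
    by move=> a Da /=; rewrite -(H a Da) /= -surjective_pairing e'K.
  by move=> [W [w ->] Hz] a Da /=; rewrite Hz // eK.
apply: gen_union => W [w ->]; exists D, (fun a => e (w a, h a)); done.
Qed.

Lemma hg_cont : continuous_wrt (tauI C I) (product_topology (tauI A I) (tauI B I)) hg.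
Proof.
apply: cont_gen; first exact: gen_top.
move=> W [U [V [OU OV ->]]].
have -> : hg @^-1` (U `*` V) =
   (fun z => (hg z).1) @^-1` U `&` (fun z => (hg z).2) @^-1` V by [].
have [_ hI _] := gen_top (tauI_basic C I).
by apply: hI; [apply: hg1_cont|apply: hg2_cont].
Qed.

Lemma homeo_prod : homeomorphic (product_topology (tauI A I) (tauI B I)) (tauI C I).
Proof.
exists hf, hg; split.
- move=> [x y]; rewrite /hg /hf /=; congr pair; apply/funext => a; by rewrite eK.
- move=> z; apply/funext => a; by rewrite /hf /hg /= -surjective_pairing e'K.
- exact: hf_cont.
- exact: hg_cont.
Qed.
End Homeo.

Theorem proposition2p6 (K : Type) (lt : K -> K -> Prop) (I : set (set K)) :
  uncountable_regular_cardinal lt ->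
  proper_ideal I -> kappa_complete I -> contains_bounded lt I ->
  homeomorphic (product_topology (tauI bool I) (tauI K I)) (tauI K I) /\
  homeomorphic (product_topology (tauI K I) (tauI K I)) (tauI K I).
Proof.
move=> [[Hirr Htr Htri Hwf] init _ unc] _ _ _.
have inf : infinite_set [set: K].
  by move=> /finite_set_countable; exact: unc.
have KK := main_top Htr Htri Hwf init inf.
have BK : [set: bool * K] #= [set: K].
  apply: Cantor_Bernstein; last first.
    by apply: (@le_of_fun _ _ _ _ (fun k => (true, k))) => // x y _ _ [].
  have [a [c [_ _ nac]]] := two_distinct inf.
  have le1 : [set: bool * K] #<= [set: K * K].
    apply: (@le_of_fun _ _ _ _ (fun p => (if p.1 then a else c, p.2))) => //.
    move=> [b x] [b' y] _ _ /= [e1 ->]; congr pair.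
    by case: b b' e1 => [] [] //= e1; case: nac; rewrite e1.
  have [le2 _] := iffLR (card_eqPle _ _) KK.
  exact: card_le_trans le1 le2.
split.
  have [e [e' [eK e'K]]] := bij_of_eq BK; exact: homeo_prod eK e'K.
have [e [e' [eK e'K]]] := bij_of_eq KK; exact: homeo_prod eK e'K.
Qed.
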